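(* In the setting described in the context, assume A1, A2 and A3. Suppose there exist a fixed subset $\mathcal K^*\subseteq\{1,\dots,K\}$ and a constant $\delta>0$ such that $\inf_{\mathbf w\in\mathcal W^*}\sum_{k\in\mathcal K^*}w_k\ge\frac12+\delta$ and $$\limsup_{n\to\infty}\Pr\Big(\bigcup_{k\in\mathcal K^*}\{Y\notin\mathcal C_k(\mathbf X;\mathcal D_n)\}\Big)\le\alpha.$$ Then $\liminf_{n\to\infty}\Pr\big(Y\in\mathcal C_{\mathrm{comb}}(\mathbf X;\mathcal D_n)\big)\ge1-\alpha$.
   Context: Setting: fix $K\ge2$ and $\alpha\in(0,1)$. For each sample size $n$, on a common probability space there are a random data set $\mathcal D_n$ and a random test pair $(\mathbf X,Y)$ with $\mathbf X\in\mathcal X\subseteq\mathbb R^p$, $Y\in\mathbb R$. For each $k\in\{1,\dots,K\}$ there is a random prediction set $\mathcal C_k(\mathbf X;\mathcal D_n)\subseteq\mathbb R$, determined by $\mathcal D_n$ and $\mathbf X$, such that the events $\{Y\in\mathcal C_k(\mathbf X;\mathcal D_n)\}$ are measurable. Let $\Delta^{K-1}=\{\mathbf w\in[0,1]^K:w_k\ge0,\sum_k w_k=1\}$ and let $\widehat{\mathbf w}_n=(\widehat w_{n,1},\dots,\widehat w_{n,K})$ be a $\sigma(\mathcal D_n)$-measurable random vector in $\Delta^{K-1}$. Let $\mathcal W^*\subseteq\Delta^{K-1}$ be a nonempty closed convex set; $\|\cdot\|$ is the Euclidean norm. A1: for every $n$ and every $k$, $\Pr(Y\notin\mathcal C_k(\mathbf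 X;\mathcal D_n)\mid\mathcal D_n)\le\alpha$ almost surely. A2: $\inf_{\mathbf w\in\mathcal W^*}\|\widehat{\mathbf w}_n-\mathbf w\|\to0$ in probability as $n\to\infty$. A3: $\mathcal C_{\mathrm{comb}}(\mathbf X;\mathcal D_n):=\{y\in\mathbb R:\sum_{k=1}^K\widehat w_{n,k}\mathbf 1\{y\in\mathcal C_k(\mathbf X;\mathcal D_n)\}>1/2\}$. *)

(* Defs.v *)
From HB Require Import structures.
From mathcomp Require Import all_boot all_order all_algebra.
From mathcomp Require Import all_classical all_reals all_analysis.
Set Implicit Arguments. Unset Strict Implicit. Unset Printing Implicit Defensive.
Import Order.TTheory GRing.Theory Num.Theory numFieldNormedType.Exports.
Local Open Scope classical_set_scope.
Local Open Scope ring_scope.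

Definition simplex (R : realType) (K : nat) : set 'rV[R]_K :=
  [set w | (forall k, 0 <= w 0 k) /\ \sum_(k < K) w 0 k = 1].

Definition convex_wset (R : realType) (K : nat) (W : set 'rV[R]_K) : Prop :=
  forall u v t, W u -> W v -> 0 <= t <= 1 ->
    W (t *: u + (1 - t) *: v).

Definition eucl_dist (R : realType) (K : nat) (u v : 'rV[R]_K) : R :=
  Num.sqrt (\sum_(k < K) (u 0 k - v 0 k) ^+ 2).

Definition dist_to (R : realType) (K : nat) (W : set 'rV[R]_K) (u : 'rV[R]_K) : R :=
  inf [set eucl_dist u w | w in W].

(* Main.v *)
Require Import Defs.
From HB Require Import structures.
From mathcomp Require Import all_boot all_order all_algebra.
From mathcomp Require Import all_classical all_reals all_analysis.
From mathcomp Require Import lra.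
Import Order.TTheory GRing.Theory Num.Theory numFieldNormedType.Exports.
Local Open Scope classical_set_scope.
Local Open Scope ring_scope.
Set Implicit Arguments. Unset Strict Implicit.

Section Helpers.
Variables (R : realType) (K : nat).

Definition N2 (a : 'I_K -> R) : R := Num.sqrt (\sum_(k < K) a k ^+ 2).

Lemma N2_ge0 a : 0 <= N2 a.
Proof. exact: sqrtr_ge0. Qed.

Lemma sum_in_le (A : pred 'I_K) (f : 'I_K -> R) :
  (forall k, 0 <= f k) -> \sum_(k < K | A k) f k <= \sum_(k < K) f k.
Proof.
move=> f0; rewrite [leRHS](bigID A) /=.
rewrite lerDl; exact: sumr_ge0.
Qed.

Lemma abs_le_N2 a j : `|a j| <= N2 a.
Proof.
rewrite -sqrtr_sqr /N2 ler_wsqrtr//.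
rewrite (bigD1 j) //= lerDl.
by apply: sumr_ge0 => i _; exact: sqr_ge0.
Qed.

Lemma N2_add a b : N2 (fun k => a k + b k) <= N2 a + \sum_(k < K) `|b k|.
Proof.
set S := \sum_(k < K) `|b k|.
have S0 : 0 <= S by apply: sumr_ge0.
have hS : forall k, `|b k| <= S.
  move=> k; rewrite /S (bigD1 k) //= lerDl; exact: sumr_ge0.
have -> : N2 a + S = Num.sqrt ((N2 a + S) ^+ 2).
  by rewrite sqrtr_sqr ger0_norm // addr_ge0 // N2_ge0.
rewrite /N2 ler_wsqrtr//.
rewrite sqrrD sqr_sqrtr; last by apply: sumr_ge0 => i _; exact: sqr_ge0.
have H : forall k, (a k + b k) ^+ 2 <=
   a k ^+ 2 + ((N2 a *+ 2) * `|b k| + S * `|b k|).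
  move=> k.
  rewrite sqrrD -addrA lerD2l; apply: lerD.
    rewrite mulrnAl ler_wMn2r//.
    apply: le_trans (ler_norm _) _; rewrite normrM ler_wpM2r//.
    exact: abs_le_N2.
  by rewrite -real_normK ?num_real// expr2 ler_wpM2r.
apply: le_trans (ler_sum _ (fun k _ => H k)) _.
rewrite big_split /= big_split /= -!mulr_sumr -/S -/(N2 a).
rewrite -addrA lerD2l mulrnAl -mulrnAr.
by rewrite expr2.
Qed.


Lemma eucl_ge0 (u w : 'rV[R]_K) : 0 <= eucl_dist u w.
Proof. exact: sqrtr_ge0. Qed.

Lemma dist_hlb (W : set 'rV[R]_K) u : has_lbound [set eucl_dist u w | w in W].
Proof. by exists 0 => _ [w _ <-]; exact: eucl_ge0. Qed.

Lemma dist_ge0 (W : set 'rV[R]_K) u : W !=set0 -> 0 <= dist_to W u.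
Proof.
move=> [w Ww]; apply: lb_le_inf; first by exists (eucl_dist u w), w.
by move=> _ [w' _ <-]; exact: eucl_ge0.
Qed.

Lemma dist_le_eucl (W : set 'rV[R]_K) u w : W w -> dist_to W u <= eucl_dist u w.
Proof. by move=> Ww; apply: ge_inf; [exact: dist_hlb | exists w]. Qed.

Lemma dist_lip (W : set 'rV[R]_K) u v : W !=set0 ->
  dist_to W u <= dist_to W v + \sum_(k < K) `|u 0 k - v 0 k|.
Proof.
move=> [w0 Ww0]; rewrite -lerBlDr; apply: lb_le_inf; first by exists (eucl_dist v w0), w0.
move=> _ [w Ww <-]; rewrite lerBlDr; apply: le_trans (dist_le_eucl u Ww) _.
have -> : eucl_dist u w = N2 (fun k => (v 0 k - w 0 k) + (u 0 k - v 0 k)).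
  rewrite /eucl_dist /N2; congr Num.sqrt; apply: eq_bigr => k _.
  by congr (_ ^+ 2); lra.
exact: (N2_add (fun k => v 0 k - w 0 k) (fun k => u 0 k - v 0 k)).
Qed.

Lemma dist_lt (W : set 'rV[R]_K) u e : W !=set0 -> dist_to W u < e ->
  exists2 w, W w & eucl_dist u w < e.
Proof.
move=> [w0 Ww0] /inf_lt []; first by exists (eucl_dist u w0), w0.
by move=> _ [w Ww <-] lt; exists w.
Qed.

Lemma abs_le_eucl (u w : 'rV[R]_K) k : `|u 0 k - w 0 k| <= eucl_dist u w.
Proof. exact: (abs_le_N2 (fun k => u 0 k - w 0 k)). Qed.

End Helpers.
Section Meas.
Variables (R : realType) (K : nat).

Lemma sum_bound (f : 'I_K -> R) c : (forall k, `|f k| <= c) ->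
  \sum_(k < K) `|f k| <= K%:R * c.
Proof.
move=> hf; apply: le_trans (ler_sum _ (fun k _ => hf k)) _.
by rewrite sumr_const card_ord mulr_natl.
Qed.

Lemma dist_set_measurable d (T : measurableType d) (W : set 'rV[R]_K)
  (v : T -> 'rV[R]_K) (eps : R) :
  (0 < K)%N -> W !=set0 -> (forall k, measurable_fun setT (fun om => v om 0 k)) ->
  measurable [set om | eps < dist_to W (v om)].
Proof.
move=> K0 W0 hv.
pose F (i : 'rV[rat]_K * rat) : set T :=
  if (0 < i.2) && (eps + K%:R * ratr i.2 < dist_to W (map_mx ratr i.1))
  then [set om | forall k, `|v om 0 k - ratr (i.1 0 k)| < ratr i.2] else set0.
have mF : forall i, measurable (F i).
  move=> i; rewrite /F; case: ifP => _ //.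
  have -> : [set om | forall k, `|v om 0 k - ratr (i.1 0 k)| < ratr i.2] =
      \bigcap_(k in [set: 'I_K]) [set om | `|v om 0 k - ratr (i.1 0 k)| < ratr i.2].
    apply/seteqP; split => om /= H; first by move=> k _; exact: H.
    by move=> k; exact: H k I.
  apply: fin_bigcap_measurable; first exact: finite_finset.
  move=> k _.
  have -> : [set om | `|v om 0 k - ratr (i.1 0 k)| < ratr i.2] = setT `&`
     ((fun om => v om 0 k) @^-1` `]ratr (i.1 0 k) - ratr i.2, ratr (i.1 0 k) + ratr i.2[).
    apply/seteqP; split => om /=.
      by move=> H; split => //; rewrite /= in_itv /= -ltr_distl.
    by move=> [_]; rewrite /= in_itv /= -ltr_distl.
  by apply: hv => //; exact: measurable_itv.
have -> : [set om | eps < dist_to W (v om)] = \bigcup_i F i.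
  apply/seteqP; split.
  - move=> om /= H.
    set D := dist_to W (v om) - eps.
    have D0 : 0 < D by rewrite subr_gt0.
    have K0' : 0 < K%:R :> R by rewrite ltr0n.
    have [r] := @rat_in_itvoo R 0 (D / (2 * K%:R)) ltac:(by rewrite divr_gt0 // mulr_gt0).
    rewrite in_itv /= => /andP[r0 rD].
    have hq : forall k, exists q : rat, ratr q \in `](v om 0 k) - ratr r, v om 0 k + ratr r[.
      move=> k; apply: rat_in_itvoo; lra.
    pose q := \row_k xchoose (hq k).
    have hqk : forall k, `|v om 0 k - ratr (q 0 k)| < ratr r.
      move=> k; rewrite mxE ltr_distlC; have := xchooseP (hq k).
      by rewrite in_itv.
    exists (q, r) => //; rewrite /F /= ifT //.
    apply/andP; split; first by rewrite -(ltr0q R).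
    have := dist_lip (v om) (map_mx ratr q) W0.
    have : \sum_(k < K) `|v om 0 k - map_mx ratr q 0 k| <= K%:R * ratr r.
      by apply: sum_bound => k; rewrite mxE; exact: ltW.
    have : ratr r * (2 * K%:R) < D by rewrite -ltr_pdivlMr // mulr_gt0.
    rewrite /D; set kr := K%:R * ratr r.
    have -> : ratr r * (2 * K%:R) = kr * 2 by rewrite /kr; lra.
    lra.
  - move=> om [[q r] _]; rewrite /F /=; case: ifP => // /andP[r0 hq] Hk.
    have := dist_lip (map_mx ratr q) (v om) W0.
    have : \sum_(k < K) `|map_mx ratr q 0 k - v om 0 k| <= K%:R * ratr r.
      by apply: sum_bound => k; rewrite mxE distrC; exact: ltW.
    lra.
by apply: countable_bigcupT_measurable => //; exact: countableP.
Qed.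
End Meas.

Unset Implicit Arguments.
Theorem theorem2
  (R : realType) (d dD : measure_display)
  (T : measurableType d)            (* the common probability space *)
  (DT : measurableType dD)          (* space of data sets *)
  (P : probability T R)
  (K p : nat) (alpha : R)
  (Dn : nat -> T -> DT)                               (* data set D_n *)
  (Xsp : set 'rV[R]_p)                               (* the feature space cal X *)
  (X : T -> 'rV[R]_p) (Y : T -> R)                    (* test pair *)
  (C : nat -> 'I_K -> DT -> 'rV[R]_p -> set R)        (* C_k(x; D) for sample size n *)
  (g : nat -> DT -> 'rV[R]_K)                        (* w_hat_n = g n (D_n) *)
  (Wstar : set 'rV[R]_K)
  (Kstar : {set 'I_K}) (delta : R) :
  (2 <= K)%N -> 0 < alpha < 1 ->
  (forall n, measurable_fun setT (Dn n)) ->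
  (forall om, Xsp (X om)) ->
  (* the coverage events are measurable *)
  (forall n k, measurable [set om | C n k (Dn n om) (X om) (Y om)]) ->
  (* w_hat_n is sigma(D_n)-measurable and simplex-valued *)
  (forall n k, measurable_fun setT (fun D => g n D 0 k)) ->
  (forall n om, simplex (g n (Dn n om))) ->
  (* W* nonempty, closed, convex subset of the simplex *)
  Wstar !=set0 -> closed Wstar -> convex_wset Wstar -> Wstar `<=` simplex (R:=R) (K:=K) ->
  (* A1: P(Y notin C_k | D_n) <= alpha a.s., stated via sigma(D_n)-events *)
  (forall n k (B : set DT), measurable B ->
     (P ([set om | ~ C n k (Dn n om) (X om) (Y om)] `&` (Dn n @^-1` B))
       <= alpha%:E * P (Dn n @^-1` B))%E) ->
  (* A2: dist(w_hat_n, W* ) -> 0 in probability *)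
  (forall eps : R, 0 < eps ->
     (fun n => P [set om | eps < dist_to Wstar (g n (Dn n om))]) @ \oo --> 0%E) ->
  0 < delta ->
  (forall w, Wstar w -> 1 / 2 + delta <= \sum_(k in Kstar) w 0 k) ->
  (limn_esup (fun n => P [set om | exists2 k, k \in Kstar & ~ C n k (Dn n om) (X om) (Y om)])
     <= alpha%:E)%E ->
  (* A3: C_comb and the conclusion *)
  ((1 - alpha)%:E <=
     limn_einf (fun n => P [set om |
        (1 / 2 < \sum_(k < K) g n (Dn n om) 0 k * \1_(C n k (Dn n om) (X om)) (Y om))%R]))%E.
Proof.
move=> K2 /andP[a0 a1] mDn _ mS mg simp W0 _ _ Wsimp _ A2 d0 Wsum Hsup.
have K0 : (0 < K)%N by apply: leq_trans K2.
have KR : 0 < K%:R :> R by rewrite ltr0n.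
set e0 := delta / (2 * K%:R).
have e0pos : 0 < e0 by apply: divr_gt0 => //; apply: mulr_gt0.
pose S n k := [set om | C n k (Dn n om) (X om) (Y om)].
pose U n := [set om | exists2 k, k \in Kstar & ~ C n k (Dn n om) (X om) (Y om)].
pose G n := [set om | 1/2 < \sum_(k in Kstar) g n (Dn n om) 0 k].
pose A n := [set om | 1/2 < \sum_(k < K) g n (Dn n om) 0 k *
                                \1_(C n k (Dn n om) (X om)) (Y om)].
pose B n := [set om | e0 < dist_to Wstar (g n (Dn n om))].
have mgk : forall n k, measurable_fun setT (fun om => g n (Dn n om) 0 k).
  by move=> n k; exact: (measurableT_comp (mg n k) (mDn n)).
have indE : forall n k, (fun om => \1_(C n k (Dn n om) (X om)) (Y om) : R) = \1_(S n k).
  by move=> n k; apply/funext => om; rewrite !indicE.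
have mU : forall n, measurable (U n).
  move=> n.
  have -> : U n = \bigcup_(k : 'I_K) (if k \in Kstar then ~` S n k else set0).
    apply/seteqP; split => om /=.
      by move=> [k kK nC]; exists k => //; rewrite kK.
    by move=> [k _]; case: ifP => // kK nC; exists k.
  apply: countable_bigcupT_measurable; first exact: countableP.
  by move=> k; case: ifP => _ //; apply: measurableC; exact: mS.
have mG : forall n, measurable (G n).
  move=> n.
  have mf : measurable_fun setT (fun om => \sum_(k in Kstar) g n (Dn n om) 0 k).
    have -> : (fun om => \sum_(k in Kstar) g n (Dn n om) 0 k) =
       (fun om => \sum_(k <- [seq k <- index_enum 'I_K | k \in Kstar]) g n (Dn n om) 0 k).
      by apply/funext => om; rewrite big_filter.
    by apply: measurable_sum => k; exact: mgk.
  have -> : G n = setT `&` ((fun om => \sum_(k in Kstar) g n (Dn n om) 0 k) @^-1`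
                 `]1/2, +oo[).
    apply/seteqP; split => om /=.
      by move=> H; split => //; rewrite /= in_itv /= andbT.
    by move=> [_]; rewrite /= in_itv /= andbT.
  by apply: mf => //; exact: measurable_itv.
have mA : forall n, measurable (A n).
  move=> n.
  have mf : measurable_fun setT (fun om => \sum_(k < K) g n (Dn n om) 0 k *
                                \1_(C n k (Dn n om) (X om)) (Y om)).
    apply: measurable_sum => k.
    apply: measurable_realfun.measurable_funM; first exact: mgk.
    rewrite indE; apply: measurable_realfun.measurable_indic; exact: mS.
  have -> : A n = setT `&` ((fun om => \sum_(k < K) g n (Dn n om) 0 k *
                                \1_(C n k (Dn n om) (X om)) (Y om)) @^-1` `]1/2, +oo[).
    apply/seteqP; split => om /=.
      by move=> H; split => //; rewrite /= in_itv /= andbT.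
    by move=> [_]; rewrite /= in_itv /= andbT.
  by apply: mf => //; exact: measurable_itv.
have mB : forall n, measurable (B n).
  move=> n; apply: (dist_set_measurable (v := fun om => g n (Dn n om))) => //.
have incl1 : forall n, ~` U n `&` G n `<=` A n.
  move=> n om [nU hG]; rewrite /A /=.
  have cov : forall k, k \in Kstar -> C n k (Dn n om) (X om) (Y om).
    by move=> k kK; apply: contrapT => nC; apply: nU; exists k.
  apply: lt_le_trans hG _.
  have -> : \sum_(k in Kstar) g n (Dn n om) 0 k =
      \sum_(k < K | k \in Kstar) g n (Dn n om) 0 k * \1_(C n k (Dn n om) (X om)) (Y om).
    by apply: eq_bigr => k kK; rewrite indicE mem_set ?mulr1 //; exact: cov.
  apply: (@sum_in_le _ _ (fun k => k \in Kstar)) => k.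
  apply: mulr_ge0; first by case: (simp n om) => + _; apply.
  by rewrite indicE.
have incl2 : forall n, ~` G n `<=` B n.
  move=> n om /= nG; rewrite /B /= ltNge; apply/negP => hle.
  have hlt : dist_to Wstar (g n (Dn n om)) < delta / K%:R.
    apply: le_lt_trans hle _; rewrite /e0 ltr_pM2l // ltf_pV2 ?posrE ?mulr_gt0 //.
    by rewrite ltr_pMl // ltr1n.
  have [w Ww hw] := dist_lt W0 hlt.
  have := Wsum w Ww.
  have : \sum_(k in Kstar) w 0 k - \sum_(k in Kstar) g n (Dn n om) 0 k <=
         K%:R * eucl_dist (g n (Dn n om)) w.
    rewrite -sumrB.
    apply: le_trans (_ : \sum_(k in Kstar) `|g n (Dn n om) 0 k - w 0 k| <= _).
      by apply: ler_sum => k _; rewrite distrC; exact: ler_norm.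
    apply: le_trans (@sum_in_le _ _ (fun k => k \in Kstar) _ (fun k => normr_ge0 _)) _.
    by apply: sum_bound => k; exact: abs_le_eucl.
  have : K%:R * eucl_dist (g n (Dn n om)) w < delta.
    by rewrite mulrC -ltr_pdivlMr.
  move/negP: nG; rewrite -leNgt.
  lra.
have hfin : forall E, measurable E -> P E = (fine (P E))%:E.
  move=> E mE; rewrite fineK // ge0_fin_numE ?measure_ge0 //.
  exact: le_lt_trans (probability_le1 P mE) (ltey _).
have ineq : forall n, ((1 - (fine (P (U n)) + fine (P (B n))))%:E <= P (A n))%E.
  move=> n.
  have mUG : measurable (~` U n `&` G n).
    by apply: measurableI; [exact: measurableC | exact: mG].
  have mUG' : measurable (U n `|` ~` G n).
    by apply: measurableU; [exact: mU | apply: measurableC; exact: mG].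
  have hA : (P (~` U n `&` G n) <= P (A n))%E.
    by apply: le_measure => //; rewrite inE.
  have hC : P (~` U n `&` G n) = (1 - P (U n `|` ~` G n))%E.
    by rewrite -probability_setC // setCU setCK.
  have h2 : (P (U n `|` ~` G n) <= P (U n) + P (B n))%E.
    apply: le_trans (measureU2 P (mU n) (measurableC (mG n))) _.
    apply: leeD2l; apply: (le_measure P) => //; rewrite inE.
      exact: measurableC.
    exact: mB.
  apply: le_trans hA; rewrite hC.
  rewrite (hfin _ (mU n)) (hfin _ (mB n)) (hfin _ mUG') -EFinD lee_fin in h2 *.
  rewrite -EFinB lee_fin; lra.
have L1 : forall e, 0 < e -> \forall n \near \oo, fine (P (U n)) < alpha + e.
  move=> e e1.
  have : (limn_esup (fun n => P (U n)) < (alpha + e)%:E)%E.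
    by apply: le_lt_trans Hsup _; rewrite lte_fin ltrDl.
  rewrite /limn_esup /limf_esup => /ereal_inf_lt [_ [V hV <-]] hlt.
  apply: filterS hV => n Vn.
  rewrite -lte_fin -hfin //; apply: le_lt_trans hlt.
  by apply: ereal_sup_ubound; exists n.
have L2 : forall e, 0 < e -> \forall n \near \oo, fine (P (B n)) < e.
  move=> e e1.
  have := A2 _ e0pos; move/fine_cvgP => [_ hc].
  by move/cvgr_lt: hc => /(_ e e1).
rewrite /limn_einf leeNr.
apply/lee_addgt0Pr => e epos.
have e2 : 0 < e / 2 by apply: divr_gt0.
have hV := filterI (L1 _ e2) (L2 _ e2).
rewrite /limn_esup /limf_esup.
pose V := (fun n : nat => fine (P (U n)) < alpha + e / 2)
     `&` (fun n : nat => fine (P (B n)) < e / 2).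
apply: (@le_trans _ _ (ereal_sup ((\- (fun n => P (A n)))%E @` V))).
  by apply: ereal_inf_lbound; exists V; [exact: hV|].
apply: (@ge_ereal_sup R) => _ [n [h1 h2] <-] /=.
rewrite leeNl.
apply: le_trans (ineq n).
by rewrite -EFinD -EFinN lee_fin; lra.
Qed.
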